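(* Let $\phi_{car}(z)=1+z+z^2/2$ and $\Omega_{car}=\phi_{car}(\mathbb{D})$, where $\mathbb{D}=\{z\in\mathbb{C}:|z|<1\}$. For $1/2<a<5/2$, let \[r_a=\begin{cases}(2a-1)/2, & 1/2<a\le 3/2,\\ (5-2a)/2, & 3/2\le a<5/2,\end{cases}\qquad R_a=\begin{cases}(5-2a)/2, & 1/2<a\le 7/6,\\ \sqrt{(2a-1)^3/(8(a-1))}, & 7/6\le a<5/2.\end{cases}\] Then \[\{w:|w-a|<r_a\}\subseteq\Omega_{car}\subseteq\{w:|w-a|<R_a\}.\] *)

(* Defs.v *)
From Stdlib Require Import Reals Lra.
From Coquelicot Require Import Coquelicot.
Open Scope R_scope.

Definition phi_car (z : C) : C := (1 + z + (z * z) / 2)%C.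

Definition Omega_car (w : C) : Prop := exists z : C, Cmod z < 1 /\ w = phi_car z.

Definition r_a (a : R) : R :=
  if Rle_dec a (3/2) then (2*a - 1)/2 else (5 - 2*a)/2.

Definition R_a (a : R) : R :=
  if Rle_dec a (7/6) then (5 - 2*a)/2
  else sqrt ((2*a - 1)^3 / (8*(a - 1))).

(* Main.v *)
Require Import Defs.
From Stdlib Require Import Reals.
From Coquelicot Require Import Coquelicot.
Open Scope R_scope.
From Stdlib Require Import Lra Psatz.

Lemma phi_car_eq x y : phi_car (x,y) = (1 + x + (x*x - y*y)/2, y + x*y).
Proof. unfold phi_car. apply injective_projections; simpl; field. Qed.

Lemma cm x y a : (Cminus (x,y) (RtoC a)) = (x - a, y).
Proof. apply injective_projections; simpl; ring. Qed.

Lemma cmod_lt (x y r : R) : 0 < r -> x^2 + y^2 < r^2 -> Cmod (x,y) < r.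
Proof.
  intros Hr H. unfold Cmod; simpl fst; simpl snd.
  rewrite <- (sqrt_pow2 r) by lra. apply sqrt_lt_1_alt. split; [nra|exact H].
Qed.

Lemma cmod_lt_inv (x y r : R) : Cmod (x,y) < r -> x^2 + y^2 < r^2.
Proof.
  unfold Cmod; simpl fst; simpl snd. intros H.
  assert (H0 := sqrt_pos (x^2+y^2)).
  assert (H1 := sqrt_sqrt (x^2+y^2) ltac:(nra)). nra.
Qed.

Lemma part2 (a x y : R) : 1/2 < a < 5/2 -> x^2 + y^2 < 1 ->
  (1 + x + (x*x - y*y)/2 - a)^2 + (y + x*y)^2 < (R_a a)^2.
Proof.
  intros ha hz.
  assert (HF : (1 + x + (x*x - y*y)/2 - a)^2 + (y + x*y)^2
    = ((1+x)^2+y^2)^2/4 - (a-1/2)*(2*(1+x)^2 - ((1+x)^2+y^2)) + (a-1/2)^2) by field.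
  rewrite HF.
  set (b := a - 1/2) in *. set (p := 1 + x) in *. set (m := p^2 + y^2) in *.
  assert (Hm2p : m < 2*p) by (unfold m, p; nra).
  assert (Hm0 : 0 <= m) by (unfold m; nra).
  assert (Hp : 0 < p) by lra.
  assert (Hpp : p^2 > m^2/4) by nra.
  assert (Hpm : p^2 <= m) by (unfold m; nra).
  assert (Hm4 : m < 4) by nra.
  assert (Hb : 0 < b) by (unfold b; lra).
  assert (HH : m^2/4 - b*(2*p^2 - m) + b^2 < m^2/4 + b*m - b*m^2/2 + b^2) by nra.
  eapply Rlt_le_trans; [exact HH|].
  unfold R_a. destruct (Rle_dec a (7/6)) as [h|h].
  - assert (Hi : 0 <= 1 - b + (1-2*b)*m/4).
    { replace (1 - b + (1-2*b)*m/4) with ((1-b)*(1-m/4) + (m/4)*(2-3*b)) by field.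
      unfold b in *. apply Rplus_le_le_0_compat; apply Rmult_le_pos; lra. }
    assert (Hj : 0 <= (4-m)*(1 - b + (1-2*b)*m/4)) by (apply Rmult_le_pos; lra).
    replace ((5 - 2*a)/2) with (2 - b) by (unfold b; field).
    nra.
  - assert (Ha1 : 0 < 8*(a-1)) by lra.
    assert (Hpos : 0 <= (2*a-1)^3/(8*(a-1))).
    { apply Rle_mult_inv_pos; [|lra]. assert (0 < 2*a-1) by lra. apply pow_le; lra. }
    replace (sqrt ((2*a-1)^3/(8*(a-1))) ^ 2) with ((2*a-1)^3/(8*(a-1))).
    2:{ rewrite pow2_sqrt; auto. }
    replace ((2*a-1)^3/(8*(a-1))) with (2*b^3/(2*b-1)) by (unfold b; field; lra).
    assert (Hb1 : 0 < 2*b-1) by (unfold b; lra).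
    assert (Hk : 2*b^3 - (2*b-1)*(m^2/4 + b*m - b*m^2/2 + b^2) = ((2*b-1)*m - 2*b)^2/4) by field.
    apply (Rmult_le_reg_l (2*b-1)); [lra|].
    replace ((2*b-1)*(2*b^3/(2*b-1))) with (2*b^3) by (field; lra).
    assert (0 <= ((2*b-1)*m - 2*b)^2/4) by (apply Rmult_le_pos; [apply pow2_ge_0|lra]).
    lra.
Qed.

Lemma part1 (a X Y : R) : 1/2 < a < 5/2 ->
  (X - (2*a-1))^2 + Y^2 < (2 * r_a a)^2 ->
  let m := sqrt (X^2+Y^2) in m^2 - 2*m - 2*X < 0.
Proof.
  intros ha H m.
  assert (Hm0 : 0 <= m) by apply sqrt_pos.
  assert (Hmm : m^2 = X^2+Y^2) by (unfold m; apply pow2_sqrt; nra).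
  assert (HXm : X <= m) by nra.
  set (B := 2*a-1) in *.
  unfold r_a in H. destruct (Rle_dec a (3/2)) as [h|h].
  - replace (2*((2*a-1)/2)) with B in H by (unfold B; field).
    assert (HmB : m^2 < 2*B*X) by nra.
    assert (HX : 0 < X) by (unfold B in *; nra).
    assert (H4 : m^2 < 4*X) by (unfold B in *; nra).
    assert (Hm4 : m < 4) by nra.
    nra.
  - replace (2*((5-2*a)/2)) with (4-B) in H by (unfold B; field).
    assert (HmB : m^2 < 16 - 8*B + 2*B*X) by nra.
    assert (HB : 2 < B < 4) by (unfold B; lra).
    assert (Hm4 : m < 4).
    { destruct (Rlt_le_dec m 4) as [l|l]; auto.
      exfalso. assert (0 <= (m-4)*(m+4-2*B)) by (apply Rmult_le_pos; lra). nra. }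
    assert (Hq : (m-4)*((B-1)*m + 2*B-4) <= 0).
    { apply Rmult_le_0_r; nra. }
    apply (Rmult_lt_reg_l B); [lra|]. nra.
Qed.

Theorem lemma2p2 (a : R) (ha : 1/2 < a < 5/2) :
  (forall w : C, Cmod (w - RtoC a)%C < r_a a -> Omega_car w) /\
  (forall w : C, Omega_car w -> Cmod (w - RtoC a)%C < R_a a).
Proof.
  split.
  - intros [w1 w2] Hw. rewrite cm in Hw. apply cmod_lt_inv in Hw.
    set (X := 2*w1 - 1). set (Y := 2*w2).
    assert (Hr : (X - (2*a-1))^2 + Y^2 < (2 * r_a a)^2) by (unfold X, Y; nra).
    pose proof (part1 a X Y ha Hr) as Hm. cbv zeta in Hm.
    set (m := sqrt (X^2+Y^2)) in *.
    assert (Hm0 : 0 <= m) by apply sqrt_pos.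
    assert (Hmm : m^2 = X^2+Y^2) by (unfold m; apply pow2_sqrt; nra).
    assert (HXm : X <= m) by nra.
    assert (HXm' : -X <= m) by nra.
    set (p := sqrt ((m+X)/2)).
    set (s := if Rle_dec 0 Y then 1 else -1).
    set (q := s * sqrt ((m-X)/2)).
    assert (Hp0 : 0 <= p) by apply sqrt_pos.
    assert (Hp2 : p*p = (m+X)/2) by (apply sqrt_sqrt; lra).
    assert (Hq0 : 0 <= sqrt ((m-X)/2)) by apply sqrt_pos.
    assert (Hq2' : sqrt ((m-X)/2) * sqrt ((m-X)/2) = (m-X)/2) by (apply sqrt_sqrt; lra).
    assert (Hs : s*s = 1) by (unfold s; destruct (Rle_dec 0 Y); lra).
    assert (Hq2 : q*q = (m-X)/2).
    { unfold q. replace (s * sqrt ((m - X) / 2) * (s * sqrt ((m - X) / 2)))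
        with ((s*s) * (sqrt ((m - X) / 2) * sqrt ((m - X) / 2))) by field.
      rewrite Hs, Hq2'. ring. }
    set (t := 2 * p * sqrt ((m-X)/2)).
    assert (Ht0 : 0 <= t) by (unfold t; apply Rmult_le_pos; lra).
    assert (Ht2 : t*t = Y*Y).
    { unfold t. replace (2 * p * sqrt ((m - X) / 2) * (2 * p * sqrt ((m - X) / 2)))
        with (4 * (p*p) * (sqrt ((m - X) / 2) * sqrt ((m - X) / 2))) by field.
      rewrite Hp2, Hq2'. nra. }
    assert (Hpq : 2*p*q = Y).
    { replace (2*p*q) with (s*t) by (unfold q, t; ring).
      unfold s; destruct (Rle_dec 0 Y); nra. }
    exists (p - 1, q). split.
    + apply cmod_lt; [lra|].
      assert (Hm1 : m*m < (2*p)*(2*p)) by nra.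
      assert (Hm2 : m < 2*p).
      { destruct (Rlt_le_dec m (2*p)) as [l|l]; auto. exfalso. assert (2*p*(2*p) <= m*m) by (apply Rmult_le_compat; lra). lra. }
      nra.
    + rewrite phi_car_eq. apply injective_projections; simpl.
      * unfold X in *. nra.
      * unfold Y in *. nra.
  - intros w [[x y] [Hz ->]]. rewrite phi_car_eq, cm.
    apply cmod_lt_inv in Hz.
    assert (HR : 0 < R_a a).
    { unfold R_a. destruct (Rle_dec a (7/6)); [lra|].
      apply sqrt_lt_R0. apply Rdiv_lt_0_compat; [|lra].
      apply pow_lt; lra. }
    apply cmod_lt; auto.
    replace (x^2+y^2) with (x^2+y^2) in Hz by field.
    apply part2; auto. lra.
Qed.
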